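(* Let $r\ge 1$, let $(s_1,\ldots,s_r)$ be an $r$-tuple of positive integers, and let $n\ge r$ be an integer. Then $H^{\star}_n(s_1,\ldots,s_r)$ is not an integer, except in the case $n=r=1$, where $H^{\star}_1(s_1)=1$.
   Context: For an $r$-tuple of positive integers $(s_1,\ldots,s_r)$ and an integer $n\ge r$, the multiple harmonic star sum is $H^{\star}_n(s_1,\ldots,s_r)=\sum_{1\le k_1\le k_2\le\cdots\le k_r\le n}\frac{1}{k_1^{s_1}\cdots k_r^{s_r}}$, the sum over all non-decreasing $r$-tuples of integers in $\{1,\dots,n\}$. *)

(* Defs.v *)
From HB Require Import structures.
From mathcomp Require Import all_boot all_order all_algebra.
Set Implicit Arguments. Unset Strict Implicit. Unset Printing Implicit Defensive.
Import Order.TTheory GRing.Theory Num.Theory.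
Local Open Scope ring_scope.

(* The exponent tuple is s : 'I_r -> nat (s_i = s i, 0-indexed);
   an index tuple is k : {ffun 'I_r -> 'I_n}, where the ordinal value
   k i represents the integer k_i = (k i).+1 in {1,...,n}. *)
Definition Hstar (n r : nat) (s : 'I_r -> nat) : rat :=
  \sum_(k : {ffun 'I_r -> 'I_n} |
          [forall i : 'I_r, forall j : 'I_r, (i <= j)%N ==> (k i <= k j)%N])
     \prod_(i < r) ((((k i).+1)%:R : rat) ^+ (s i))^-1.

(* Main.v *)
Require Import Defs.
From HB Require Import structures.
From mathcomp Require Import all_boot all_order all_algebra.
From mathcomp Require Import ring.
Import Order.TTheory GRing.Theory Num.Theory.
Local Open Scope ring_scope.

Definition P2 (e : nat) (x : rat) :=
  exists q : nat, odd q /\ x * q%:R * 2%:R ^+ e \is a Num.int.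

Lemma P2_mul e1 e2 x y : P2 e1 x -> P2 e2 y -> P2 (e1 + e2) (x * y).
Proof.
move=> [q1 [o1 h1]] [q2 [o2 h2]]; exists (q1 * q2)%N; split.
  by rewrite oddM o1 o2.
have -> : x * y * (q1 * q2)%N%:R * 2%:R ^+ (e1 + e2) =
  (x * q1%:R * 2%:R ^+ e1) * (y * q2%:R * 2%:R ^+ e2).
  by rewrite natrM exprD; ring.
exact: rpredM.
Qed.

Lemma P2_le e e' x : P2 e x -> (e <= e')%N -> P2 e' x.
Proof.
move=> [q [o h]] le; exists q; split => //.
have -> : x * q%:R * 2%:R ^+ e' = (x * q%:R * 2%:R ^+ e) * 2%:R ^+ (e' - e).
  by rewrite -[RHS]mulrA -exprD subnKC.
by rewrite rpredM // rpredX // natr_int.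
Qed.

Lemma P2_add e x y : P2 e x -> P2 e y -> P2 e (x + y).
Proof.
move=> [q1 [o1 h1]] [q2 [o2 h2]]; exists (q1 * q2)%N; split.
  by rewrite oddM o1 o2.
have -> : (x + y) * (q1 * q2)%N%:R * 2%:R ^+ e =
  (x * q1%:R * 2%:R ^+ e) * q2%:R + (y * q2%:R * 2%:R ^+ e) * q1%:R.
  by rewrite natrM; ring.
by rewrite rpredD // rpredM // natr_int.
Qed.

Lemma P2_opp e x : P2 e x -> P2 e (- x).
Proof.
move=> [q [o h]]; exists q; split => //.
by rewrite !mulNr rpredN.
Qed.

Lemma P2_0 e : P2 e 0.
Proof. by exists 1%N; split => //; rewrite !mul0r rpred0. Qed.

Lemma P2_shift c x : P2 c x -> P2 0 (2%:R ^+ c * x).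
Proof.
move=> [q [o h]]; exists q; split => //.
by rewrite expr0 mulr1 (_ : _ * _ = x * q%:R * 2%:R ^+ c) //; ring.
Qed.

Lemma P2_half : ~ P2 0 (2%:R^-1).
Proof.
move=> [q [o h]].
rewrite expr0 mulr1 intrEge0 ?mulr_ge0 ?invr_ge0 ?ler0n // in h.
case/natrP: h => m hm.
have : (q%:R : rat) = (2 * m)%N%:R.
  by rewrite natrM -hm mulrA mulrV ?mul1r // unitfE pnatr_eq0.
move/eqP; rewrite eqr_nat => /eqP E.
by move: o; rewrite E oddM.
Qed.

Lemma P2_inv (k s : nat) : (0 < k)%N -> P2 (logn 2 k * s) ((k%:R ^+ s)^-1).
Proof.
move=> k0; case: (pfactor_coprime (isT : prime 2) k0) => o co ko.
exists (o ^ s)%N; split.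
  by rewrite oddX; move: co; rewrite coprime2n => ->; rewrite orbT.
have o0 : (0 < o)%N by move: k0; rewrite ko muln_gt0 => /andP[].
have -> : (2%:R : rat) ^+ (logn 2 k * s) = (2 ^ logn 2 k)%N%:R ^+ s.
  by rewrite natrX -exprM.
rewrite {1}ko natrM exprMn invfM -natrX.
have on : (o%:R : rat) != 0 by rewrite pnatr_eq0 -lt0n.
have tn : ((2 ^ logn 2 k)%N%:R : rat) != 0 by rewrite pnatr_eq0 -lt0n expn_gt0.
rewrite (_ : _ * _ = 1) ?rpred1 //.
rewrite !natrX; field.
by rewrite !expf_neq0 // pnatr_eq0.
Qed.
From mathcomp Require Import zify.

Lemma vbound n k : (0 < k)%N -> (k <= n)%N -> (logn 2 k <= trunc_log 2 n)%N.
Proof.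
move=> k0 kn; apply: trunc_log_max => //.
exact: leq_trans (dvdn_leq k0 (pfactor_dvdnn 2 k)) kn.
Qed.

Lemma veq n k : (0 < k)%N -> (k <= n)%N -> logn 2 k = trunc_log 2 n ->
  k = (2 ^ trunc_log 2 n)%N.
Proof.
move=> k0 kn E.
have := pfactor_dvdnn 2 k; rewrite E => /dvdnP [c Hc].
have lt := trunc_log_ltn n (isT : (1 < 2)%N).
have p0 : (0 < 2 ^ trunc_log 2 n)%N by rewrite expn_gt0.
move: lt; rewrite expnS.
have : (c * 2 ^ trunc_log 2 n <= n)%N by rewrite -Hc.
set M := (2 ^ trunc_log 2 n)%N in Hc p0 *.
move=> h1 h2.
have c1 : (c < 2)%N.
  by rewrite -(ltn_pmul2r p0); exact: leq_ltn_trans h1 h2.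
have c0 : (0 < c)%N by move: k0; rewrite Hc muln_gt0 => /andP[].
have c11 : c = 1%N by lia.
by rewrite Hc c11 mul1n.
Qed.

Theorem theorem1 (r : nat) (s : 'I_r -> nat) (n : nat) :
  (1 <= r)%N -> (forall i, (0 < s i)%N) -> (r <= n)%N ->
  (~ (n = 1%N /\ r = 1%N) -> Hstar n s \isn't a Num.int) /\
  (n = 1%N /\ r = 1%N -> Hstar n s = 1).
Proof.
move=> r1 spos rn; split; last first.
  case=> En Er; subst n r.
  rewrite /Hstar.
  rewrite (eq_bigl (fun _ => true)); last first.
    move=> k; apply/forallP => i; apply/forallP => j; apply/implyP => _.
    by rewrite !ord1.
  rewrite (eq_bigr (fun _ => 1)); last first.
    move=> k _; apply: big1 => i _.
    by rewrite (ord1 (k i)) /= expr1n invr1.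
  by rewrite sumr_const card_ffun !card_ord.
move=> nex.
have n2 : (1 < n)%N by case: n nex rn => [|[|n]] nex rn //; exfalso; lia.
set a := trunc_log 2 n.
have a1 : (0 < a)%N by rewrite /a trunc_log_gt0.
set m := (2 ^ a)%N.
have m0 : (0 < m)%N by rewrite expn_gt0.
have mn : (m <= n)%N by apply: trunc_logP => //; lia.
have i0lt : (m.-1 < n)%N by rewrite prednK.
set i0 : 'I_n := Ordinal i0lt.
set k0 : {ffun 'I_r -> 'I_n} := [ffun _ => i0].
set S := (\sum_(i < r) s i)%N.
have S1 : (0 < S)%N.
  rewrite /S (bigD1 (Ordinal r1)) //=.
  by have := spos (Ordinal r1); lia.
apply/negP => Hint.
have HP : P2 0 (2%:R ^+ (a * S).-1 * Hstar n s).
  by exists 1%N; split => //; rewrite expr0 !mulr1 rpredM // rpredX // natr_int.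
rewrite /Hstar (bigD1 k0) /= in HP; last first.
  by apply/forallP => i; apply/forallP => j; apply/implyP => _; rewrite !ffunE.
rewrite mulrDr in HP.
have E0 : 2%:R ^+ (a * S).-1 * \prod_(i < r) ((k0 i).+1%:R ^+ s i)^-1 = (2%:R : rat)^-1.
  rewrite (eq_bigr (fun i => ((m%:R : rat) ^+ s i)^-1)); last first.
    by move=> i _; rewrite ffunE /= prednK.
  rewrite prodfV prodrXr -/S /m natrX -exprM.
  rewrite -{2}(prednK (_ : (0 < a * S)%N)) ?muln_gt0 ?a1 ?S1 // exprS.
  rewrite invfM mulrC -mulrA mulVf ?mulr1 // expf_neq0 // pnatr_eq0.
rewrite E0 in HP.
set rest := (X in 2%:R^-1 + X) in HP.
have Hrest : P2 0 rest.
  rewrite /rest mulr_sumr.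
  apply: (big_ind (P2 0)); [exact: P2_0 | exact: P2_add |].
  move=> k /andP [_ kne].
  apply: P2_shift.
  apply: (@P2_le (\sum_(i < r) logn 2 (k i).+1 * s i)%N).
    apply: (@big_ind2 rat nat (fun x e => P2 e x) 1%R *%R 0%N addn).
    - by exists 1%N; split => //; rewrite !mulr1 rpred1.
    - by move=> x1 e1 x2 e2 h1 h2; exact: P2_mul.
    - by move=> i _; exact: P2_inv.
  have : ~~ [forall j, k j == i0].
    apply: contra kne => /forallP h; apply/eqP/ffunP => j.
    by rewrite ffunE; apply/eqP.
  rewrite negb_forall => /existsP [j kj].
  have lj : (logn 2 (k j).+1 < a)%N.
    rewrite ltn_neqAle vbound //= andbT.
    apply: contra kj => /eqP E.
    have := veq n (k j).+1 (ltn0Sn (k j)) (ltn_ord (k j)) E.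
    rewrite -/a -/m => Em.
    apply/eqP; apply: val_inj => /=; rewrite -Em //.
  rewrite /S (bigD1 j) //= (bigD1 j (P := predT)) //= mulnDr big_distrr /=.
  have : (\sum_(i < r | i != j) logn 2 (k i).+1 * s i <=
          \sum_(i < r | i != j) a * s i)%N.
    apply: leq_sum => i _; rewrite leq_mul2r vbound ?orbT //.
  have := spos j.
  set A := (\sum_(i < r | i != j) _)%N.
  set B := (\sum_(i < r | i != j) _)%N.
  move=> sj AB.
  have : (logn 2 (k j).+1 * s j <= (a - 1) * s j)%N.
    by rewrite leq_mul2r; apply/orP; right; lia.
  lia.
apply: P2_half.
have -> : (2%:R : rat)^-1 = (2%:R^-1 + rest) + - rest by rewrite addrK.
apply: P2_add => //; exact: P2_opp.
Qed.
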